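(* Let $R$ be a ring and $u\in R$. Suppose that $m:=\mathrm{char}(R)$ is finite and $J(R)$ is a nil ideal of index $s+1$, where $s\geq 0$. If $u^t-1\in J(R)$ for some $t\in\mathbb{N}$, then $u^{tm^s}=1$.
   Context: All rings are associative with identity; $\mathrm{char}(R):=|1\cdot\mathbb{Z}|$. A nil ideal $I$ is nil of index $k$ if $r^k=0$ for all $r\in I$ and $k$ is the minimal natural number with this property. *)

(* Defs.v *)
(* Rings: pzRingType = associative ring with identity
   (the zero ring allowed). *)
From HB Require Import structures.
From mathcomp Require Import all_boot all_order all_algebra.
Set Implicit Arguments. Unset Strict Implicit. Unset Printing Implicit Defensive.
Import GRing.Theory.
Local Open Scope ring_scope.

Definition left_ideal (R : pzRingType) (I : R -> Prop) : Prop :=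
  I 0 /\ (forall x y, I x -> I y -> I (x + y)) /\ (forall r x, I x -> I (r * x)).

Definition maximal_left_ideal (R : pzRingType) (I : R -> Prop) : Prop :=
  [/\ left_ideal I, ~ I 1 &
      forall K : R -> Prop, left_ideal K -> ~ K 1 ->
        (forall x, I x -> K x) -> forall x, K x -> I x].

Definition jacobson (R : pzRingType) : R -> Prop :=
  fun x => forall I : R -> Prop, maximal_left_ideal I -> I x.

Definition nil_of_index (R : pzRingType) (I : R -> Prop) (k : nat) : Prop :=
  (forall r, I r -> r ^+ k = 0) /\
  (forall k', (0 < k')%N -> (forall r, I r -> r ^+ k' = 0) -> (k <= k')%N).

Definition char_is (R : pzRingType) (m : nat) : Prop :=
  [/\ (0 < m)%N, (m%:R : R) = 0 &
      forall k, (0 < k)%N -> (k%:R : R) = 0 -> (m <= k)%N].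

(* Main.v *)
Require Import Defs.
From HB Require Import structures.
From mathcomp Require Import all_boot all_order all_algebra.
Local Open Scope ring_scope.
Import GRing.Theory.

Lemma tower (R : pzRingType) (m : nat) (x : R) :
  (0 < m)%N -> (m%:R : R) = 0 -> forall n,
  exists y : R, GRing.comm x y /\ (x + 1) ^+ (m ^ n) = 1 + x ^+ (2 ^ n) * y.
Proof.
case: m => // m' _ mR; elim=> [|n [y [cy IH]]].
  by exists 1; split; [exact: commr1| rewrite expn0 expr1 expn0 expr1 mulr1 addrC].
set z := x ^+ (2 ^ n) * y.
have cz : GRing.comm x z by apply: commrM => //; apply: commrX; apply: commr_refl.
set w := \sum_(i < m') z ^+ i *+ 'C(m'.+1, i.+2).
exists (y ^+ 2 * w); split.
  apply: commrM; first exact: commrX.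
  by apply: commr_sum => i _; apply: commrMn; apply: commrX.
rewrite expnSr exprM IH -/z [1 + z]addrC exprD1n.
rewrite big_ord_recl big_ord_recl.
rewrite expr0 bin0 mulr1n expr1 bin1 -mulr_natr mR mulr0 add0r.
rewrite expnSr muln2 -addnn exprD.
have -> : \sum_(i < m') z ^+ lift ord0 (lift ord0 i) *+ 'C(m'.+1, lift ord0 (lift ord0 i))
   = z ^+ 2 * w.
  rewrite /w mulr_sumr; apply: eq_bigr => i _.
  by rewrite mulrnAr -exprD.
congr (_ + _); rewrite mulrA; congr (_ * _).
rewrite /z expr2 !mulrA; congr (_ * _).
have cxy : GRing.comm (x ^+ (2 ^ n)) y by apply/commr_sym/commrX/commr_sym.
by rewrite -!mulrA cxy.
Qed.

Theorem lemma2p10 (R : pzRingType) (u : R) (m s t : nat) :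
  char_is R m ->
  nil_of_index (@jacobson R) s.+1 ->
  jacobson (u ^+ t - 1) ->
  u ^+ (t * m ^ s) = 1.
Proof.
move=> [m0 mR _] [nil _] Jj.
have jn := nil _ Jj.
have [y [_ E]] := @tower R m (u ^+ t - 1) m0 mR s.
rewrite exprM -[u ^+ t](subrK 1) E.
have lt : (s.+1 <= 2 ^ s)%N by exact: ltn_expl.
by rewrite -(subnKC lt) exprD jn mul0r mul0r addr0.
Qed.
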